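(* Let $G$ be a group, $S$ a subgroup of $G$, and $T,U$ subsets of $G$. (i) If $(S,T,U)$ is a basic TPP triple of $G$, then $T$ and $U$ are subtransversals for $S$ in $G$ (with respect to the partition of $G$ into right cosets $S\backslash G$) such that $\operatorname{supp}_{S\backslash G}(T)\cap \operatorname{supp}_{S\backslash G}(U)=\{S\}$. (ii) If $T$ and $U$ are also subgroups of $G$, and $T$ and $U$ are subtransversals for $S$ in $G$ satisfying $\operatorname{supp}_{S\backslash G}(T)\cap \operatorname{supp}_{S\backslash G}(U)=\{S\}$, then $(S,T,U)$ is a TPP triple of $G$.
   Context: For a nonempty subset $X$ of a group $G$, $Q(X):=\{xy^{-1}: x,y\in X\}$. Nonempty subsets $S,T,U$ of $G$ form a TPP triple if for all $s\in Q(S)$, $t\in Q(T)$, $u\in Q(U)$: $stu=1$ iff $s=t=u=1$. A TPP triple is basic if $1\in S\cap T\cap U$. Let $C$ be a finite nonempty set and $\mathcal C$ a partition of $C$. A set $X\subseteq C$ is a subtransversal for $\mathcal C$ with support $\operatorname{supp}_{\mathcal C}(X)=\mathcal T\subseteq\mathcal C$ if for every block $C_i\in\mathcal C$, $|X\cap C_i|=1$ when $C_i\in\mathcal T$ and $|X\cap C_i|=0$ otherwise. For a subgroup $S$ of $G$, a subtransversal for $S$ in $G$ means a subtransversal for the partition $S\backslash G=\{Sr: r\in G\}$ of $G$ into right cosets of $S$. *)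

(* Defs.v *)
From mathcomp Require Import all_boot all_fingroup.
Set Implicit Arguments. Unset Strict Implicit. Unset Printing Implicit Defensive.
Local Open Scope group_scope.

Definition Qset (gT : finGroupType) (X : {set gT}) : {set gT} :=
  [set x * y^-1 | x in X, y in X].

Definition TPP_triple (gT : finGroupType) (G S T U : {set gT}) : Prop :=
  [/\ [/\ S \subset G, T \subset G & U \subset G],
      [/\ S != set0, T != set0 & U != set0] &
      forall s t u, s \in Qset S -> t \in Qset T -> u \in Qset U ->
        (s * t * u = 1 <-> [/\ s = 1, t = 1 & u = 1])].

Definition basic_TPP_triple (gT : finGroupType) (G S T U : {set gT}) : Prop :=
  TPP_triple G S T U /\ 1 \in S :&: T :&: U.

Definition subtransversal_with_support (T : finType) (P : {set {set T}})
    (X : {set T}) (Sup : {set {set T}}) : Prop :=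
  [/\ X \subset cover P, Sup \subset P &
      forall B, B \in P -> #|X :&: B| = (if B \in Sup then 1 else 0)%N].

(* Main.v *)
Require Import Defs.
From mathcomp Require Import all_boot all_fingroup.
Local Open Scope group_scope.

Section Helpers.
Variable gT : finGroupType.
Implicit Types (G S H : {group gT}) (X : {set gT}).

Lemma Qset_group H : Qset H = H.
Proof.
apply/setP=> z; apply/imset2P/idP=> [[x y Hx Hy ->]|Hz].
  by rewrite groupM ?groupV.
by exists z 1; rewrite ?group1 ?invg1 ?mulg1.
Qed.

Lemma mem_Qset X x y : x \in X -> y \in X -> x * y^-1 \in Qset X.
Proof. by move=> hx hy; apply/imset2P; exists x y. Qed.

Lemma subtrans_of_inj G S X : S \subset G -> X \subset G ->
  {in X &, forall x y, x * y^-1 \in S -> x = y} ->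
  subtransversal_with_support (rcosets S G) X (rcosets S X).
Proof.
move=> sSG sXG inj; split.
- by rewrite (cover_partition (rcosets_partition sSG)).
- by apply: imsetS.
move=> B /rcosetsP [r Gr ->].
case: ifP => [/rcosetsP [x Xx Ex] | nB].
  apply/eqP/cards1P; exists x; apply/setP=> y; rewrite !inE Ex.
  apply/andP/eqP => [[Xy]|->]; last by rewrite Xx rcoset_refl.
  by rewrite mem_rcoset => /inj; apply.
apply/eqP; rewrite cards_eq0; apply/eqP/setP=> y; rewrite !inE.
apply/negbTE/negP=> /andP [Xy /rcoset_eqP E].
by move: nB; rewrite -E => /negbT/negP; apply; apply/rcosetsP; exists y.
Qed.

Lemma subtrans_mem P X Sup B x :
  subtransversal_with_support P X Sup -> B \in P -> x \in X -> x \in B ->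
  B \in Sup.
Proof.
move=> [_ _ c] PB Xx Bx; move: (c B PB); case: ifP => // _ /eqP.
by rewrite cards_eq0 => /eqP/setP/(_ x); rewrite !inE Xx Bx.
Qed.

Lemma subtrans_uniq P X Sup B x y :
  subtransversal_with_support P X Sup -> B \in P -> x \in X -> x \in B ->
  y \in X -> y \in B -> x = y.
Proof.
move=> [_ _ c] PB Xx Bx Xy By.
have : #|X :&: B| <= 1 by rewrite c //; case: ifP.
by move/card_le1_eqP; apply; rewrite inE ?Xx ?Xy ?Bx ?By.
Qed.

End Helpers.
Arguments mem_Qset {gT X x y}.
Arguments subtrans_of_inj {gT G S X}.
Arguments subtrans_mem {gT P X Sup B x}.
Arguments subtrans_uniq {gT P X Sup B x y}.
Arguments Qset_group {gT H}.

Theorem mainTheorem2 (gT : finGroupType) (G S : {group gT}) (T U : {set gT}) :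
  S \subset G -> T \subset G -> U \subset G ->
  (* (i) *)
  (basic_TPP_triple G S T U ->
     exists SupT SupU : {set {set gT}},
       [/\ subtransversal_with_support (rcosets S G) T SupT,
           subtransversal_with_support (rcosets S G) U SupU &
           SupT :&: SupU = [set (S : {set gT})]])
  /\
  (* (ii) *)
  (group_set T -> group_set U ->
     forall SupT SupU : {set {set gT}},
       subtransversal_with_support (rcosets S G) T SupT ->
       subtransversal_with_support (rcosets S G) U SupU ->
       SupT :&: SupU = [set (S : {set gT})] ->
     TPP_triple G S T U).
Proof.
move=> sSG sTG sUG; split.
  move=> [[_ _ tpp] one].
  move: one; rewrite !inE => /andP [/andP [S1 T1] U1].
  have Q1 (X : {set gT}) : 1 \in X -> 1 \in Qset X.
    by move=> h; rewrite -(mulg1 1) -{2}invg1 mem_Qset.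
  have QS s : s \in S -> s \in Qset S by rewrite Qset_group.
  exists (rcosets S T), (rcosets S U); split.
  - apply: subtrans_of_inj => // x y Xx Xy xyS.
    have := (tpp ((x * y^-1)^-1) (x * y^-1) 1).
    case=> //; [by rewrite QS ?groupV | by rewrite mem_Qset | by rewrite Q1 |].
    move=> h _; move: h; rewrite mulVg mulg1 => /(_ erefl) [_ /eqP + _].
    by rewrite divg_eq1 => /eqP.
  - apply: subtrans_of_inj => // x y Xx Xy xyS.
    have := (tpp ((x * y^-1)^-1) 1 (x * y^-1)).
    case=> //; [by rewrite QS ?groupV | by rewrite Q1 | by rewrite mem_Qset |].
    move=> h _; move: h; rewrite mulg1 mulVg => /(_ erefl) [_ _ /eqP].
    by rewrite divg_eq1 => /eqP.
  apply/setP=> B; rewrite !inE; apply/andP/eqP => [[]|->]; last first.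
    by split; apply/rcosetsP; [exists 1 | exists 1]; rewrite ?rcoset1.
  move=> /rcosetsP [t Tt ->] /rcosetsP [u Uu Etu].
  have tuS : t * u^-1 \in S by rewrite -mem_rcoset -Etu rcoset_refl.
  have := (tpp (u * t^-1) t u^-1).
  case=> //.
  - by rewrite QS // -(invgK u) -invMg groupV.
  - by have := mem_Qset Tt T1; rewrite invg1 mulg1.
  - by rewrite -(mul1g u^-1) mem_Qset.
  move=> h _; move: h; rewrite mulgKV mulgV => /(_ erefl) [_ -> _].
  by rewrite rcoset1.
move=> gT' gU' SupT SupU hT hU hI.
set TG := Group gT'; set UG := Group gU'.
have TT : T = TG by []. have UU : U = UG by [].
split.
- by split.
- split; apply/set0Pn; exists 1; rewrite ?group1 //.
  + exact: (@group1 _ TG).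
  + exact: (@group1 _ UG).
move=> s t u; rewrite Qset_group (Qset_group (H:=TG)) (Qset_group (H:=UG)) => Ss Tt Uu.
split; last by case=> -> -> ->; rewrite !mulg1.
move=> stu.
have T1 : (1 : gT) \in T by exact: (@group1 _ TG).
have U1 : (1 : gT) \in U by exact: (@group1 _ UG).
have Uu' : u^-1 \in U by exact: (@groupVr _ UG).
have Gt : t \in G by apply: (subsetP sTG).
have Gu' : u^-1 \in G by apply: (subsetP sUG).
have Pt : S :* t \in rcosets S G by apply/rcosetsP; exists t.
have Pu : S :* u^-1 \in rcosets S G by apply/rcosetsP; exists u^-1.
have E : u^-1 = s * t by rewrite -[s * t](mulgK u) stu mul1g.
have Etu : S :* u^-1 = S :* t.
  by apply/rcoset_eqP; rewrite mem_rcoset E mulgK.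
have : S :* t \in SupT :&: SupU.
  rewrite inE (subtrans_mem hT Pt Tt (rcoset_refl _ _)) /=.
  by rewrite -Etu (subtrans_mem hU Pu Uu' (rcoset_refl _ _)).
rewrite hI inE => /eqP St.
have t1 : t = 1.
  apply: (subtrans_uniq hT Pt Tt (rcoset_refl _ _) T1).
  by rewrite St group1.
have u1 : u^-1 = 1.
  apply: (subtrans_uniq hU Pu Uu' (rcoset_refl _ _) U1).
  by rewrite Etu St group1.
have u1' : u = 1 by rewrite -(invgK u) u1 invg1.
by move: stu; rewrite t1 u1' !mulg1 => ->.
Qed.
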